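(* Let $f=f(x_1,\ldots,x_n)$ be a positive non-canalyzing Boolean function such that for every $i\in[n]$ both restrictions $f_{|x_i=0}$ and $f_{|x_i=1}$ are canalyzing. Then for each $i\in[n]$: (a) there is a maximal zero of $f$ having $0$'s in exactly two coordinates, one of which is $i$; (b) there is a minimal one of $f$ having $1$'s in exactly two coordinates, one of which is $i$.
   Context: $B=\{0,1\}$, $\preceq$ the coordinatewise order on $B^n$. $f$ is positive if $f(\mathbf{x})=1$ and $\mathbf{x}\preceq\mathbf{y}$ imply $f(\mathbf{y})=1$. Maximal zeros are $\preceq$-maximal false points, minimal ones are $\preceq$-minimal true points. $f_{|x_i=\alpha}$ is obtained by fixing $x_i=\alpha$. $f$ is canalyzing if for some $i$, $f_{|x_i=0}$ or $f_{|x_i=1}$ is constant. *)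

(* Defs.v *)
From mathcomp Require Import all_boot.
Set Implicit Arguments. Unset Strict Implicit. Unset Printing Implicit Defensive.

Definition point (n : nat) := {ffun 'I_n -> bool}.
Definition boolfun (n : nat) := point n -> bool.

Definition ple n (x y : point n) : bool := [forall k, x k ==> y k].

Definition positive n (f : boolfun n) : Prop :=
  forall x y : point n, f x -> ple x y -> f y.

Definition max_zero n (f : boolfun n) (x : point n) : Prop :=
  f x = false /\ forall y : point n, ple x y -> f y = false -> y = x.

Definition min_one n (f : boolfun n) (x : point n) : Prop :=
  f x = true /\ forall y : point n, ple y x -> f y = true -> y = x.

Definition canalyzing n (f : boolfun n) : Prop :=
  exists (i : 'I_n) (a : bool),
    forall x y : point n, x i = a -> y i = a -> f x = f y.

(* The restriction f_{|x_i=a}, a function of the n-1 remaining variables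
   (x_j, j <> i), is canalyzing: for some j <> i and value b, fixing x_j = b in
   the restriction yields a constant function. *)
Definition restr_canalyzing n (f : boolfun n) (i : 'I_n) (a : bool) : Prop :=
  exists (j : 'I_n) (b : bool), j != i /\
    forall x y : point n, x i = a -> y i = a -> x j = b -> y j = b -> f x = f y.

(* Main.v *)
Require Import Defs.
From mathcomp Require Import all_boot.

Section Aux.
Variables (n : nat) (f : boolfun n).
Hypothesis fpos : positive f.
Hypothesis fnc : ~ canalyzing f.

Definition ev (k : 'I_n) : point n := [ffun m => m == k].
Definition cev (k : 'I_n) : point n := [ffun m => m != k].

Lemma mono_le (x y : point n) : (forall k, x k -> y k) -> f x -> f y.
Proof.
move=> H fx; apply: (fpos x y fx); apply/forallP => k; apply/implyP; exact: H.
Qed.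
Arguments mono_le {x y}.

Lemma f_ev k : f (ev k) = false.
Proof.
apply/negbTE/negP => H; apply: fnc; exists k, true => x y xk yk.
have -> : f x = true.
  apply: (mono_le (x := ev k)) => // m; rewrite ffunE => /eqP ->; by rewrite xk.
symmetry; apply: (mono_le (x := ev k)) => // m; rewrite ffunE => /eqP ->; by rewrite yk.
Qed.

Lemma f_cev k : f (cev k) = true.
Proof.
apply/negP => H; apply: fnc; exists k, false => x y xk yk.
have -> : f x = false.
  apply/negP => fx; apply: H; apply: (mono_le (x := x)) => // m xm.
  rewrite ffunE; apply/eqP => E; by rewrite E xk in xm.
symmetry; apply/negP => fy; apply: H; apply: (mono_le (x := y)) => // m ym.
rewrite ffunE; apply/eqP => E; by rewrite E yk in ym.
Qed.

Lemma partA i : restr_canalyzing f i false ->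
  exists x : point n, max_zero f x /\ x i = false /\ #|[set k | ~~ x k]| = 2.
Proof.
case=> j [b [ji Hc]].
case: b Hc => Hc.
  exfalso.
  have E : f (ev j) = f (cev i).
    by apply: Hc; rewrite !ffunE ?eqxx //= ?(eq_sym i) ?(negbTE ji).
  by rewrite f_ev f_cev in E.
pose x : point n := [ffun m => (m != i) && (m != j)].
have f0 : f [ffun=> false] = false.
  apply/negP => H; suff: f (ev i) by rewrite f_ev. apply: (mono_le (x := [ffun=> false])) H.
  by move=> m; rewrite ffunE.
have fx : f x = false.
  by rewrite -f0; apply: Hc; rewrite !ffunE ?eqxx ?andbF.
exists x; split; [split=> // y|split].
- move=> /forallP lxy fy.
  have yi : y i = false.
    apply/negP => yi; suff: f y by rewrite fy. apply: (mono_le (x := cev j)) (f_cev j).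
    move=> m; rewrite ffunE => mj; case: (eqVneq m i) => [->|mi] //.
    have := lxy m; rewrite !ffunE mi mj => /implyP; exact.
  have yj : y j = false.
    apply/negP => yj; suff: f y by rewrite fy. apply: (mono_le (x := cev i)) (f_cev i).
    move=> m; rewrite ffunE => mi; case: (eqVneq m j) => [->|mj] //.
    have := lxy m; rewrite !ffunE mi mj => /implyP; exact.
  apply/ffunP => m; rewrite !ffunE.
  case: (eqVneq m i) => [->//|mi]; case: (eqVneq m j) => [->//|mj] /=.
  have := lxy m; rewrite !ffunE mi mj => /implyP; exact.
- by rewrite ffunE eqxx.
- have -> : [set k | ~~ x k] = [set i; j].
    by apply/setP => m; rewrite !inE ffunE negb_and !negbK.
  by rewrite cards2 eq_sym ji.
Qed.

Lemma partB i : restr_canalyzing f i true ->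
  exists x : point n, min_one f x /\ x i = true /\ #|[set k | x k]| = 2.
Proof.
case=> j [b [ji Hc]].
case: b Hc => Hc; last first.
  exfalso.
  have E : f (ev i) = f (cev j).
    by apply: Hc; rewrite !ffunE ?eqxx //= ?(eq_sym i) ?(negbTE ji).
  by rewrite f_ev f_cev in E.
pose x : point n := [ffun m => (m == i) || (m == j)].
have f1 : f [ffun=> true] = true.
  by apply: (mono_le (x := cev i)) (f_cev i) => m _; rewrite ffunE.
have fx : f x = true.
  by rewrite -f1; apply: Hc; rewrite !ffunE ?eqxx ?orbT.
exists x; split; [split=> // y|split].
- move=> /forallP lyx fy.
  have yi : y i = true.
    apply/negPn/negP => yi; suff: f (ev j) by rewrite f_ev. apply: (mono_le (x := y)) fy.
    move=> m ym; rewrite ffunE; have := lyx m; rewrite ym !ffunE /=.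
    case: (eqVneq m i) => [E|_] //=; by move: yi; rewrite -E ym.
  have yj : y j = true.
    apply/negPn/negP => yj; suff: f (ev i) by rewrite f_ev. apply: (mono_le (x := y)) fy.
    move=> m ym; rewrite ffunE; have := lyx m; rewrite ym !ffunE /= orbC.
    case: (eqVneq m j) => [E|_] //=; by move: yj; rewrite -E ym.
  apply/ffunP => m; rewrite !ffunE.
  case: (eqVneq m i) => [->//|mi]; case: (eqVneq m j) => [->//|mj] /=.
  have := lyx m; rewrite !ffunE ?(negbTE mi) ?(negbTE mj) /=; by case: (y m).
- by rewrite ffunE eqxx.
- have -> : [set k | x k] = [set i; j].
    by apply/setP => m; rewrite !inE ffunE.
  by rewrite cards2 eq_sym ji.
Qed.

End Aux.

Theorem mainTheorem5 (n : nat) (f : boolfun n) :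
  positive f -> ~ canalyzing f ->
  (forall i : 'I_n, restr_canalyzing f i false /\ restr_canalyzing f i true) ->
  forall i : 'I_n,
    (exists x : point n, max_zero f x /\ x i = false /\
        #|[set k | ~~ x k]| = 2) /\
    (exists x : point n, min_one f x /\ x i = true /\
        #|[set k | x k]| = 2).
Proof.
move=> fpos fnc H i; have [H0 H1] := H i; split.
  exact: partA.
exact: partB.
Qed.
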